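(* If an online algorithm in the discrete-time model is $\alpha$-competitive for MaxProb (all-ties-win) when the true prior is $F_K$ and $\beta$-competitive when the true prior is $F_k$ for every $k\in[K-1]$, then there is a minor-oblivious algorithm with the same guarantees.
   Context: Discrete-time model: $n$ values $x_1,\dots,x_n$ i.i.d. from a true prior are revealed in the order $x_1,\dots,x_n$; an online algorithm irrevocably accepts at most one; $\mathrm{ALG}$ is the accepted index. MaxProb with all-ties-win: success iff the accepted value equals $\max_i x_i$; the competitive ratio is the success probability. $[K]=\{1,\dots,K\}$; $\tilde F$ is a distribution on $[K]$ with pmf $\tilde f$, $\tilde f(1)>0$; $F_k(\ell)=\tilde F(\ell)/\tilde F(k)$ for $\ell\le k$ and $F_k(\ell)=1$ for $\ell>k$. The conditional acceptance probability of an algorithm is $\mathrm{Acc}_t(\mathbf x_{1:t})=\Pr[\mathrm{ALG}=t\mid\mathrm{ALG}\ge t,(x_1,\dots,x_t)=\mathbf x_{1:t}]$. An algorithm is minor-oblivious if $\mathrm{Acc}_t(\mathbf x_{1:t})=\mathrm{Acc}_t(\mathbf y_{1:t})$ whenever $x_t=y_t=\max\mathbf x_{1:t}=\max\mathbf y_{1:t}$. *)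

(* Defs.v *)
From HB Require Import structures.
From mathcomp Require Import all_boot all_order all_algebra.
From mathcomp Require Import reals.
Set Implicit Arguments. Unset Strict Implicit. Unset Printing Implicit Defensive.
Import Order.TTheory GRing.Theory Num.Theory.
Local Open Scope ring_scope.

(* Values: [K] = {1,...,K} is represented by 'I_K, the ordinal i standing
   for the value i+1 (order-preserving, so maxima are unaffected). *)

Definition Ftilde (R : realType) (K : nat) (ft : 'I_K -> R) (k : nat) : R :=
  \sum_(i : 'I_K | (val i < k)%N) ft i.

Definition prior_k (R : realType) (K : nat) (ft : 'I_K -> R) (k : nat)
  (i : 'I_K) : R :=
  if (val i < k)%N then ft i / Ftilde ft k else 0.

(* An online algorithm is given by its conditional acceptance probabilities:
   acc s = Acc_t(x_{1:t}) for the prefix s = x_{1:t} (t = size s). *)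
Definition algorithm (R : realType) (K : nat) := seq 'I_K -> R.

Definition valid_alg (R : realType) (K n : nat) (acc : algorithm R K) : Prop :=
  forall s : seq 'I_K, (0 < size s <= n)%N -> 0 <= acc s <= 1.

(* Pr[ALG = t | x] (t is 0-based: index t means the (t+1)-th arrival) *)
Definition pr_alg_eq (R : realType) (K n : nat) (acc : algorithm R K)
  (x : n.-tuple 'I_K) (t : 'I_n) : R :=
  (\prod_(s < t) (1 - acc (take s.+1 x))) * acc (take t.+1 x).

Definition success (R : realType) (K n : nat) (p : 'I_K -> R)
  (acc : algorithm R K) : R :=
  \sum_(x : n.-tuple 'I_K)
     (\prod_(i < n) p (tnth x i)) *
     (\sum_(t < n) pr_alg_eq acc x t *
        (if val (tnth x t) == \max_(i <- x) val i then 1 else 0)).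

Definition minor_oblivious (R : realType) (K n : nat) (acc : algorithm R K)
  : Prop :=
  forall (p1 p2 : seq 'I_K) (v : 'I_K),
    size p1 = size p2 -> (size p1 < n)%N ->
    \max_(i <- rcons p1 v) val i = val v ->
    \max_(i <- rcons p2 v) val i = val v ->
    acc (rcons p1 v) = acc (rcons p2 v).

(* Main.v *)
Require Import Defs.
From HB Require Import structures.
From mathcomp Require Import all_boot all_order all_algebra.
From mathcomp Require Import reals.
From mathcomp Require Import zify ring lra.
Import Order.TTheory GRing.Theory Num.Theory.
Local Open Scope ring_scope.
Set Implicit Arguments. Unset Strict Implicit.

Section SumSeq.
Variables (R : realType) (K : nat).
Fixpoint sumseq (m : nat) (f : seq 'I_K -> R) : R :=
  match m with 0 => f [::] | m'.+1 => \sum_(y : 'I_K) sumseq m' (fun s => f (y :: s)) end.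

Lemma sum_tupleS m (F : m.+1.-tuple 'I_K -> R) :
  \sum_(x : m.+1.-tuple 'I_K) F x = \sum_(y : 'I_K) \sum_(x : m.-tuple 'I_K) F [tuple of y :: x].
Proof.
rewrite pair_big /=.
rewrite (reindex (fun p : 'I_K * m.-tuple 'I_K => [tuple of p.1 :: p.2])) //=.
exists (fun x : m.+1.-tuple 'I_K => (thead x, [tuple of behead x])).
  by move=> [y x] _ /=; congr pair; apply: val_inj.
by move=> x _; apply: val_inj => /=; case: x => -[|a s] //.
Qed.

Lemma sum_tuple m (f : seq 'I_K -> R) :
  \sum_(x : m.-tuple 'I_K) f (val x) = sumseq m f.
Proof.
elim: m f => [|m IH] f /=.
  by rewrite (big_pred1 [tuple]) // => t; rewrite [t]tuple0; apply/esym/eqP.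
rewrite sum_tupleS; apply: eq_bigr => y _; exact: (IH (fun s => f (y :: s))).
Qed.

Lemma sumseq_ext m f g : (forall s, size s = m -> f s = g s) ->
  sumseq m f = sumseq m g.
Proof.
elim: m f g => [|m IH] f g H /=; first exact: H.
apply: eq_bigr => y _; apply: IH => s Hs; apply: H => /=; rewrite Hs.
done.
Qed.

Lemma sumseq_le m f g : (forall s, size s = m -> f s <= g s) ->
  sumseq m f <= sumseq m g.
Proof.
elim: m f g => [|m IH] f g H /=; first exact: H.
apply: ler_sum => y _; apply: IH => s Hs; apply: H => /=; rewrite Hs.
done.
Qed.

Lemma sumseq_cat a b f :
  sumseq (a + b) f = sumseq a (fun q => sumseq b (fun r => f (q ++ r))).
Proof.
elim: a f => [|a IH] f //=.
by apply: eq_bigr => y _; rewrite IH.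
Qed.

Lemma sumseq_rcons m f :
  sumseq m.+1 f = sumseq m (fun q => \sum_y f (rcons q y)).
Proof.
rewrite -addn1 sumseq_cat; apply: sumseq_ext => q _ /=.
by apply: eq_bigr => y _; rewrite cats1.
Qed.

Lemma sumseq_big (I : finType) m (F : I -> seq 'I_K -> R) :
  sumseq m (fun s => \sum_(i : I) F i s) = \sum_(i : I) sumseq m (F i).
Proof.
elim: m F => [|m IH] F //=.
under eq_bigr => y _ do rewrite (IH (fun i s => F i (y :: s))).
by rewrite exchange_big.
Qed.

Lemma sumseq_scale m c f :
  sumseq m (fun s => c * f s) = c * sumseq m f.
Proof.
elim: m f => [|m IH] f //=.
rewrite mulr_sumr; apply: eq_bigr => y _; exact: IH.
Qed.

Lemma sumseq_scaler m c f :
  sumseq m (fun s => f s * c) = sumseq m f * c.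
Proof.
rewrite mulrC -sumseq_scale; apply: sumseq_ext => s _; exact: mulrC.
Qed.

Lemma sumseq_sub m f g :
  sumseq m (fun s => f s - g s) = sumseq m f - sumseq m g.
Proof.
elim: m f g => [|m IH] f g //=.
rewrite -sumrB; apply: eq_bigr => y _; exact: IH.
Qed.

Definition ind (b : bool) : R := if b then 1 else 0.
Definition Pw (p : 'I_K -> R) (s : seq 'I_K) : R := \prod_(y <- s) p y.
Definition mx (s : seq 'I_K) : nat := \max_(i <- s) val i.
Definition surv (acc : algorithm R K) (s : seq 'I_K) : R :=
  \prod_(j < size s) (1 - acc (take j.+1 s)).
Definition Qf (p : 'I_K -> R) (acc : algorithm R K) t (y : 'I_K) (u : nat) : R :=
  sumseq t (fun q => Pw p q * surv acc q * acc (rcons q y) * ind (mx q <= u)%N).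
Definition Hf (p : 'I_K -> R) (v : 'I_K) b : R :=
  sumseq b (fun w => Pw p w * ind (mx w <= val v)%N).
Definition indt (t : nat) (s : seq 'I_K) : bool :=
  if drop t s is v :: _ then val v == mx s else false.

Lemma indM a b : ind (a && b) = ind a * ind b.
Proof. by case: a; case: b; rewrite /ind ?mulr1 ?mulr0 ?mul0r. Qed.

Lemma ind_ge0 b : 0 <= ind b.
Proof. by case: b; rewrite /ind. Qed.

Lemma Pw_cat p s1 s2 : Pw p (s1 ++ s2) = Pw p s1 * Pw p s2.
Proof. by rewrite /Pw big_cat. Qed.

Lemma mx_cat s1 s2 : mx (s1 ++ s2) = maxn (mx s1) (mx s2).
Proof. by rewrite /mx big_cat. Qed.

Lemma mx_cons y s : mx (y :: s) = maxn (val y) (mx s).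
Proof. by rewrite /mx big_cons. Qed.

Lemma mx_nil : mx [::] = 0%N.
Proof. by rewrite /mx big_nil. Qed.

Lemma mx_rcons s y : mx (rcons s y) = maxn (mx s) (val y).
Proof. by rewrite -cats1 mx_cat mx_cons mx_nil maxn0. Qed.

Lemma Pw_rcons p s y : Pw p (rcons s y) = Pw p s * p y.
Proof. by rewrite -cats1 Pw_cat /Pw big_seq1. Qed.

Lemma success_formula n p acc :
  success n p acc =
  \sum_(t < n) \sum_(v : 'I_K) p v * Hf p v (n - t.+1) * Qf p acc t v (val v).
Proof.
rewrite /success.
pose G := fun s : seq 'I_K => Pw p s * \sum_(t < n)
   ((\prod_(j < t) (1 - acc (take j.+1 s))) * acc (take t.+1 s) * ind (indt t s)).
transitivity (\sum_(x : n.-tuple 'I_K) G (val x)).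
  apply: eq_bigr => x _; rewrite /G; congr (_ * _); first by rewrite /Pw big_tuple.
  apply: eq_bigr => t _; rewrite /pr_alg_eq; congr (_ * _).
  rewrite /indt (drop_nth (tnth x t)) ?size_tuple // -tnth_nth.
  by rewrite /ind /mx.
rewrite sum_tuple /G.
under sumseq_ext => s _ do rewrite mulr_sumr.
rewrite sumseq_big; apply: eq_bigr => t _.
have E : n = (t + (n - t.+1).+1)%N by have := ltn_ord t; lia.
set b := (n - t.+1)%N.
set G' := (fun s => _).
have -> : sumseq n G' = sumseq (t + b.+1) G' by rewrite -E.
rewrite sumseq_cat /=.
transitivity (sumseq t (fun q => \sum_(v : 'I_K)
   (Pw p q * surv acc q * acc (rcons q v) * ind (mx q <= val v)%N) *
   (p v * Hf p v b))).
  apply: sumseq_ext => q sq; apply: eq_bigr => v _.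
  rewrite /Hf -sumseq_scale -sumseq_scale; apply: sumseq_ext => w sw.
  rewrite /G' Pw_cat /= /Pw big_cons -/(Pw p q) -/(Pw p w).
  have -> : \prod_(j < t) (1 - acc (take j.+1 (q ++ v :: w))) = surv acc q.
    rewrite /surv sq; apply: eq_bigr => j _; rewrite takel_cat //.
    by rewrite sq; exact: ltn_ord.
  have -> : take t.+1 (q ++ v :: w) = rcons q v.
    by rewrite -cats1 -sq; elim: q {sq} => [|a q /= ->]; rewrite /= ?take0.
  have -> : indt t (q ++ v :: w) = (mx q <= val v)%N && (mx w <= val v)%N.
    rewrite /indt drop_size_cat // mx_cat mx_cons.
    by apply/eqP/andP; lia.
  rewrite indM; ring.
rewrite sumseq_big; apply: eq_bigr => v _.
by rewrite sumseq_scaler mulrC.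
Qed.

Lemma Pw_cons p y s : Pw p (y :: s) = p y * Pw p s.
Proof. by rewrite /Pw big_cons. Qed.

Lemma Pw_prop p f c q u : (forall i : 'I_K, (val i <= u)%N -> p i = c * f i) ->
  (mx q <= u)%N -> Pw p q = c ^+ size q * Pw f q.
Proof.
move=> H; elim: q => [|y q IH]; first by rewrite /Pw !big_nil expr0 mulr1.
rewrite mx_cons geq_max => /andP [hy hq].
by rewrite !Pw_cons IH // H // exprS /=; ring.
Qed.

Lemma Qf_prop p f c acc t v u : (forall i : 'I_K, (val i <= u)%N -> p i = c * f i) ->
  Qf p acc t v u = c ^+ t * Qf f acc t v u.
Proof.
move=> H; rewrite /Qf -sumseq_scale; apply: sumseq_ext => q sq.
case: (boolP (mx q <= u)%N) => hq; last by rewrite /ind !mulr0.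
by rewrite (@Pw_prop p f c q u H hq) sq; ring.
Qed.
End SumSeq.

Section Constr.
Variables (R : realType) (K n : nat) (ft : 'I_K -> R) (acc : algorithm R K).
Hypothesis ft_ge0 : forall i, 0 <= ft i.
Hypothesis vacc : valid_alg n acc.
Let vacc' : forall s, (0 < size s <= n)%N -> 0 <= acc s <= 1 := vacc.

Definition Nf (b : algorithm R K) t (u : nat) : R :=
  sumseq t (fun q => Pw ft q * surv b q * ind R (mx q <= u)%N).
Definition Fu (u : nat) : R := \sum_(y : 'I_K) ft y * ind R (val y <= u)%N.
Definition MM t (v : 'I_K) : R := Qf ft acc t v (val v).
Fixpoint Nn t (u : nat) : R := match t with
  | 0 => 1
  | t'.+1 => Fu u * Nn t' u - \sum_(y : 'I_K) ft y * ind R (val y <= u)%N * MM t' y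
  end.
Definition aa t (v : 'I_K) : R :=
  if Nn t (val v) == 0 then 0 else MM t v / Nn t (val v).
Definition acc' : algorithm R K := fun s =>
  match s with [::] => 0 | x :: s' =>
    if mx s == val (last x s') then aa (size s') (last x s') else 0 end.

Lemma maxn_eq_r m k : (maxn m k == k) = (m <= k)%N.
Proof. by apply/eqP/idP; lia. Qed.

Lemma surv_rcons (b : algorithm R K) q y :
  surv b (rcons q y) = surv b q * (1 - b (rcons q y)).
Proof.
rewrite /surv size_rcons big_ord_recr /=; congr (_ * _).
  apply: eq_bigr => j _ /=; rewrite -cats1 takel_cat //; exact: ltn_ord.
by rewrite take_oversize // size_rcons.
Qed.

Lemma acc'_rcons q v : acc' (rcons q v) = ind R (mx q <= val v)%N * aa (size q) v.
Proof.
case: q => [|x q].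
  by rewrite /= mx_cons mx_nil maxn0 eqxx /ind /= mul1r.
have -> : acc' (rcons (x :: q) v) = acc' (x :: rcons q v) by [].
rewrite /acc' -[x :: rcons q v]/(rcons (x :: q) v) mx_rcons last_rcons maxn_eq_r.
rewrite size_rcons /ind; case: ifP => _; [by rewrite mul1r | by rewrite mul0r].
Qed.

Lemma sumseq0 m : sumseq m (fun _ : seq 'I_K => (0 : R)) = 0.
Proof. elim: m => [|m IH] //=; by rewrite big1. Qed.

Lemma sumseq_ge0 m (f : seq 'I_K -> R) : (forall s, size s = m -> 0 <= f s) -> 0 <= sumseq m f.
Proof. move=> H; rewrite -(sumseq0 m); exact: sumseq_le. Qed.

Lemma N_step (b : algorithm R K) t u :
  Nf b t.+1 u = Fu u * Nf b t u - \sum_(y : 'I_K) ft y * ind R (val y <= u)%N * Qf ft b t y u.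
Proof.
rewrite /Nf sumseq_rcons.
transitivity (sumseq t (fun q => Fu u * (Pw ft q * surv b q * ind R (mx q <= u)%N) -
  \sum_(y : 'I_K) ft y * ind R (val y <= u)%N *
     (Pw ft q * surv b q * b (rcons q y) * ind R (mx q <= u)%N))).
  apply: sumseq_ext => q _; rewrite /Fu mulr_suml -sumrB; apply: eq_bigr => y _.
  rewrite Pw_rcons surv_rcons mx_rcons geq_max indM; ring.
rewrite sumseq_sub sumseq_scale sumseq_big; congr (_ - _); apply: eq_bigr => y _.
by rewrite sumseq_scale.
Qed.

Lemma Pw_ge0 q : 0 <= Pw ft q.
Proof. by apply: prodr_ge0 => i _. Qed.

Lemma surv_ge0 q : (size q < n)%N -> 0 <= surv acc q.
Proof.
move=> hq; apply: prodr_ge0 => j _; rewrite subr_ge0.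
have := @vacc' (take j.+1 q); rewrite size_take; case: ifP => h.
  by move=> /(_ _) /andP [] //; apply/andP; split => //; lia.
by have hj := ltn_ord j; move=> /(_ _) /andP [] //; apply/andP; split; lia.
Qed.

Lemma acc_bnd q y : (size q < n)%N -> 0 <= acc (rcons q y) <= 1.
Proof. by move=> hq; apply: vacc'; rewrite size_rcons /=. Qed.

Lemma MM_ge0 t v : (t < n)%N -> 0 <= MM t v.
Proof.
move=> ht; apply: sumseq_ge0 => q sq.
have := acc_bnd v (_ : (size q < n)%N); rewrite sq => /(_ ht) /andP [h0 h1].
by rewrite !mulr_ge0 ?Pw_ge0 ?surv_ge0 ?sq ?ind_ge0.
Qed.

Lemma MM_le t v : (t < n)%N -> MM t v <= Nf acc t (val v).
Proof.
move=> ht; apply: sumseq_le => q sq.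
have := acc_bnd v (_ : (size q < n)%N); rewrite sq => /(_ ht) /andP [h0 h1].
have hz : 0 <= Pw ft q * surv acc q * ind R (mx q <= val v)%N.
  by rewrite !mulr_ge0 ?Pw_ge0 ?surv_ge0 ?sq ?ind_ge0.
by rewrite mulrAC -[X in _ <= X]mulr1 ler_wpM2l.
Qed.

Lemma Q_mono t y u : (t < n)%N -> (val y <= u)%N -> MM t y <= Qf ft acc t y u.
Proof.
move=> ht hy; apply: sumseq_le => q sq.
have := acc_bnd y (_ : (size q < n)%N); rewrite sq => /(_ ht) /andP [h0 h1].
apply: ler_wpM2l; first by rewrite !mulr_ge0 ?Pw_ge0 ?surv_ge0 ?sq.
rewrite /ind; case: ifP => h; last by case: ifP.
by rewrite (leq_trans h hy).
Qed.

Lemma Q_acc' t y u : (val y <= u)%N -> Qf ft acc' t y u = aa t y * Nf acc' t (val y).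
Proof.
move=> hy; rewrite /Qf /Nf -sumseq_scale; apply: sumseq_ext => q sq.
rewrite acc'_rcons sq.
have E : ind R (mx q <= val y)%N * ind R (mx q <= u)%N = ind R (mx q <= val y)%N.
  rewrite /ind; case: ifP => h; last by rewrite mul0r.
  by rewrite (leq_trans h hy) mulr1.
rewrite -[in RHS]E; ring.
Qed.

Lemma main_ind t : (t <= n)%N ->
  (forall u, Nf acc' t u = Nn t u) /\ (forall u, Nf acc t u <= Nn t u).
Proof.
elim: t => [|t IH] ht.
  have E : forall b u, Nf b 0 u = 1.
    by move=> b u; rewrite /Nf /= /Pw big_nil /surv /= big_ord0 mx_nil /ind /= !mulr1.
  by split => u; rewrite E.
have ht' : (t < n)%N by [].
have [A B] := IH (ltnW ht').
have key : forall y, aa t y * Nn t (val y) = MM t y.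
  move=> y; rewrite /aa; case: eqP => [E|nz]; last by rewrite divfK //; apply/eqP.
  rewrite mul0r; apply/eqP; rewrite eq_le MM_ge0 //= -E; exact: le_trans (MM_le _ ht') (B _).
split => u.
  rewrite N_step A /=; congr (_ - _); apply: eq_bigr => y _.
  case: (boolP (val y <= u)%N) => hy; last by rewrite /ind !mulr0 !mul0r.
  by rewrite Q_acc' // A key.
rewrite N_step /=; apply: lerB.
  by apply: ler_wpM2l => //; apply: sumr_ge0 => y _; rewrite mulr_ge0 ?ind_ge0.
apply: ler_sum => y _.
case: (boolP (val y <= u)%N) => hy; last by rewrite /ind !mulr0 !mul0r.
by apply: ler_wpM2l; [rewrite mulr_ge0 ?ind_ge0 | exact: Q_mono].
Qed.

Lemma aa_bnd t v : (t < n)%N -> 0 <= aa t v <= 1.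
Proof.
move=> ht; have [A B] := main_ind (ltnW ht).
rewrite /aa; case: eqP => [_|nz]; first by rewrite lexx ler01.
have hM0 := MM_ge0 v ht; have hM := le_trans (MM_le v ht) (B _).
have hp : 0 < Nn t (val v).
  by rewrite lt_def; apply/andP; split; [apply/eqP | exact: le_trans hM0 hM].
by rewrite divr_ge0 ?(ltW hp) //= ler_pdivrMr // mul1r.
Qed.

Lemma valid_acc' : valid_alg n acc'.
Proof.
move=> s; case/lastP: s => [|q v] //; rewrite size_rcons => /andP [_ h].
rewrite acc'_rcons; have /andP [h0 h1] := aa_bnd v h.
by rewrite /ind; case: ifP => _; rewrite ?mul1r ?mul0r ?h0 ?h1 // lexx ler01.
Qed.

Lemma mo_acc' : minor_oblivious n acc'.
Proof.
move=> p1 p2 v hs _ h1 h2; rewrite !acc'_rcons hs.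
have e1 : mx (rcons p1 v) = val v := h1.
have e2 : mx (rcons p2 v) = val v := h2.
move: e1 e2; rewrite !mx_rcons => /eqP; rewrite maxn_eq_r => -> /eqP.
by rewrite maxn_eq_r => ->.
Qed.

Lemma MM'_eq t v : (t < n)%N -> Qf ft acc' t v (val v) = MM t v.
Proof.
move=> ht; have [A B] := main_ind (ltnW ht).
rewrite Q_acc' // A /aa; case: eqP => [E|nz]; last by rewrite divfK //; apply/eqP.
rewrite mul0r; apply/eqP; rewrite eq_le MM_ge0 //= -E; exact: le_trans (MM_le _ ht) (B _).
Qed.

Lemma success_eq k : success n (prior_k ft k) acc' = success n (prior_k ft k) acc.
Proof.
rewrite !success_formula; apply: eq_bigr => t _; apply: eq_bigr => v _.
case: (ltnP (val v) k) => hv; last by rewrite /prior_k ltnNge hv /= !mul0r.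
have Hp : forall i : 'I_K, (val i <= val v)%N -> prior_k ft k i = (Ftilde ft k)^-1 * ft i.
  by move=> i hi; rewrite /prior_k (leq_ltn_trans hi hv) mulrC.
rewrite (Qf_prop acc' t v Hp) (Qf_prop acc t v Hp) MM'_eq //; exact: ltn_ord.
Qed.
End Constr.


Unset Implicit Arguments.

Theorem mainTheorem19 (R : realType) (K n : nat) (ft : 'I_K -> R)
  (alpha beta : R) :
  (forall i, 0 <= ft i) -> \sum_i ft i = 1 ->
  (forall i : 'I_K, val i = 0%N -> 0 < ft i) ->
  forall acc : algorithm R K, valid_alg n acc ->
  alpha <= success n (prior_k ft K) acc ->
  (forall k : nat, (1 <= k <= K.-1)%N -> beta <= success n (prior_k ft k) acc) ->
  exists acc' : algorithm R K,
    [/\ valid_alg n acc', minor_oblivious n acc',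
        alpha <= success n (prior_k ft K) acc' &
        forall k : nat, (1 <= k <= K.-1)%N ->
          beta <= success n (prior_k ft k) acc'].
Proof.
move=> ft0 _ _ acc vacc ha hb.
exists (acc' ft acc); split.
- apply: (valid_acc' ft0 vacc).
- apply: mo_acc'.
- by rewrite (success_eq ft0 vacc).
- by move=> k hk; rewrite (success_eq ft0 vacc); apply: hb.
Qed.
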